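(* Let $G$ be a countable connected graph. Let $X\subseteq|G|$ be a closed subspace, and let $O_1,O_2$ be disjoint open subsets of $X$ with $X=O_1\cup O_2$. Then the set of edges of $G$ with one endvertex in $O_1$ and the other in $O_2$ is finite.
   Context: Graphs may have parallel edges and loops. The space $|G|$: a ray is a one-way infinite path; two rays are edge-equivalent if for every finite set $F$ of edges some component of $G-F$ contains subrays of both; the classes are the edge-ends of $G$. View edges as copies of $[0,1]$ and let $X_G$ be the quotient obtained by identifying them at common vertices. $|G|$ has point set $X_G$ together with all edge-ends; its open sets are the unions of sets $\widetilde C$, where $C$ is a connected component of $X_G\setminus Z$ for some finite set $Z$ of inner points of edges, and $\widetilde C$ is $C$ together with all edge-ends represented by a ray in $C$. *)

(* Defs.v *)
From Stdlib Require Import Reals List.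
Open Scope R_scope.
Set Implicit Arguments.

(* A multigraph: vertex type V, edge type E, ends e = (u, w) the two
   endvertices of e (u = w for a loop; parallel edges allowed). *)

Definition countable (T : Type) : Prop :=
  exists f : T -> nat, forall a b, f a = f b -> a = b.

Inductive conn_avoid (V E : Type) (ends : E -> V * V) (F : list E) : V -> V -> Prop :=
| ca_refl : forall u, conn_avoid ends F u u
| ca_step : forall u w x e, ~ In e F ->
    (ends e = (u, w) \/ ends e = (w, u)) ->
    conn_avoid ends F w x -> conn_avoid ends F u x.

Definition graph_connected (V E : Type) (ends : E -> V * V) : Prop :=
  forall u v, conn_avoid ends nil u v.

Inductive xpt (V E : Type) : Type :=
| PV : V -> xpt V E
| PI : E -> {t : R | 0 < t < 1} -> xpt V E.
Arguments PV {V E} _.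
Arguments PI {V E} _ _.

Definition edge_pt (V E : Type) (ends : E -> V * V) (e : E) (t : R) : xpt V E :=
  match Rlt_dec 0 t with
  | left h0 =>
      match Rlt_dec t 1 with
      | left h1 => PI e (exist (fun s => 0 < s < 1) t (conj h0 h1))
      | right _ => PV (snd (ends e))
      end
  | right _ => PV (fst (ends e))
  end.

(* Quotient topology on X_G: U is open iff its preimage in every copy
   [0,1] of an edge is open in [0,1]. *)
Definition xg_open (V E : Type) (ends : E -> V * V) (U : xpt V E -> Prop) : Prop :=
  forall e t, 0 <= t <= 1 -> U (edge_pt ends e t) ->
    exists d, 0 < d /\ forall s, 0 <= s <= 1 -> Rabs (s - t) < d ->
      U (edge_pt ends e s).

Definition xg_connected (V E : Type) (ends : E -> V * V) (A : xpt V E -> Prop) : Prop :=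
  ~ exists U1 U2, xg_open ends U1 /\ xg_open ends U2 /\
      (forall x, A x -> U1 x \/ U2 x) /\
      (exists x, A x /\ U1 x) /\ (exists x, A x /\ U2 x) /\
      (forall x, A x -> U1 x -> U2 x -> False).

Definition xg_component (V E : Type) (ends : E -> V * V) (S : xpt V E -> Prop)
  (x : xpt V E) : xpt V E -> Prop :=
  fun y => exists A, (forall z, A z -> S z) /\ xg_connected ends A /\ A x /\ A y.

Record ray (V E : Type) (ends : E -> V * V) : Type := Ray {
  rv : nat -> V;
  re : nat -> E;
  rv_inj : forall m n, rv m = rv n -> m = n;
  re_link : forall n, ends (re n) = (rv n, rv (S n)) \/ ends (re n) = (rv (S n), rv n)
}.

(* Edge-equivalence: for every finite edge set F, some component of G - F
   (the vertex class of x) contains subrays (tails from k1, k2) of both rays. *)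
Definition edge_equiv (V E : Type) (ends : E -> V * V) (R1 R2 : ray ends) : Prop :=
  forall F : list E, exists (x : V) (k1 k2 : nat),
    (forall n, (k1 <= n)%nat -> conn_avoid ends F x (rv R1 n) /\ ~ In (re R1 n) F) /\
    (forall n, (k2 <= n)%nat -> conn_avoid ends F x (rv R2 n) /\ ~ In (re R2 n) F).

Definition is_edge_end (V E : Type) (ends : E -> V * V) (P : ray ends -> Prop) : Prop :=
  exists R, forall R', P R' <-> edge_equiv R R'.

Definition gend (V E : Type) (ends : E -> V * V) : Type :=
  { P : ray ends -> Prop | is_edge_end P }.

Definition gpt (V E : Type) (ends : E -> V * V) : Type :=
  (xpt V E + gend ends)%type.

Definition ray_in (V E : Type) (ends : E -> V * V) (C : xpt V E -> Prop) (R : ray ends) : Prop :=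
  forall n, C (PV (rv R n)) /\ forall t, C (PI (re R n) t).

Definition tilde (V E : Type) (ends : E -> V * V) (C : xpt V E -> Prop) : gpt ends -> Prop :=
  fun p => match p with
           | inl x => C x
           | inr w => exists R, proj1_sig w R /\ ray_in C R
           end.

Definition basic_set (V E : Type) (ends : E -> V * V) (B : gpt ends -> Prop) : Prop :=
  exists (Z : list (xpt V E)) (x : xpt V E),
    (forall z, In z Z -> exists e t, z = PI e t) /\ ~ In x Z /\
    (forall p, B p <-> tilde (xg_component ends (fun y => ~ In y Z) x) p).

Definition g_open (V E : Type) (ends : E -> V * V) (U : gpt ends -> Prop) : Prop :=
  forall p, U p -> exists B, basic_set B /\ B p /\ (forall q, B q -> U q).

Definition g_closed (V E : Type) (ends : E -> V * V) (X : gpt ends -> Prop) : Prop :=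
  g_open (fun p => ~ X p).

Definition g_open_in (V E : Type) (ends : E -> V * V) (X O : gpt ends -> Prop) : Prop :=
  exists U, g_open U /\ forall p, O p <-> X p /\ U p.

(* Main.v *)
Require Import Defs.
From Stdlib Require Import Reals List.
From Stdlib Require Import Lia Lra Classical ClassicalEpsilon.

Module P1.

Local Open Scope nat_scope.
Section G.
Variables (V E : Type) (ends : E -> V * V).

Lemma ca_trans F u w x : conn_avoid ends F u w -> conn_avoid ends F w x -> conn_avoid ends F u x.
Proof. induction 1; intros; auto. eapply ca_step; eauto. Qed.

Lemma ca_edge F u w e : ~ In e F -> (ends e = (u, w) \/ ends e = (w, u)) -> conn_avoid ends F u w.
Proof. intros. eapply ca_step; eauto. apply ca_refl. Qed.

Lemma ca_sym F u x : conn_avoid ends F u x -> conn_avoid ends F x u.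
Proof. induction 1. apply ca_refl. eapply ca_trans; eauto. eapply ca_edge; eauto. tauto. Qed.

Lemma ca_mono F1 F2 u x : (forall e, In e F2 -> In e F1) -> conn_avoid ends F1 u x -> conn_avoid ends F2 u x.
Proof. intros H. induction 1. apply ca_refl. eapply ca_step; eauto. Qed.

Lemma ca_split1 F e u x : conn_avoid ends F u x ->
  conn_avoid ends (e :: F) u x \/ conn_avoid ends (e :: F) (fst (ends e)) x \/
  conn_avoid ends (e :: F) (snd (ends e)) x.
Proof.
  induction 1. left; apply ca_refl.
  destruct (classic (e0 = e)) as [->|Hne].
  - destruct IHconn_avoid as [Hl|Hr]; [|tauto].
    destruct H0 as [H0|H0]; rewrite H0; simpl; tauto.
  - destruct IHconn_avoid as [Hl|Hr]; [|tauto]. left.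
    eapply ca_step; eauto. simpl. intros [|]; auto.
Qed.

Definition reps (u : V) (F : list E) : list V :=
  u :: flat_map (fun e => fst (ends e) :: snd (ends e) :: nil) F.

Lemma ca_reps u x F : conn_avoid ends nil u x -> exists r, In r (reps u F) /\ conn_avoid ends F r x.
Proof.
  intros H. induction F as [|e F IH].
  - exists u. split. left; auto. auto.
  - destruct IH as [r [Hr Hc]].
    destruct (ca_split1 F e r x Hc) as [H1|[H1|H1]].
    + exists r. split; auto. unfold reps in *. simpl in *. destruct Hr as [Hr|Hr]; [left; auto | right; right; right; auto].
    + exists (fst (ends e)). split; auto. unfold reps; simpl; auto.
    + exists (snd (ends e)). split; auto. unfold reps; simpl; auto.
Qed.

Inductive walkk (F : list E) : nat -> V -> V -> Prop :=
| wk0 u : walkk F 0 u u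
| wkS n u w x e : ~ In e F -> (ends e = (u, w) \/ ends e = (w, u)) -> walkk F n w x -> walkk F (S n) u x.

Lemma walkk_ca F n u x : walkk F n u x -> conn_avoid ends F u x.
Proof. induction 1. apply ca_refl. eapply ca_step; eauto. Qed.

Lemma ca_walkk F u x : conn_avoid ends F u x -> exists n, walkk F n u x.
Proof. induction 1. exists 0. constructor. destruct IHconn_avoid as [n Hn]. exists (S n). econstructor; eauto. Qed.

Variable bad : E -> Prop.
Definition Rich (P : V -> Prop) : Prop :=
  forall l, exists e, bad e /\ ~ In e l /\ P (fst (ends e)) /\ P (snd (ends e)).

Lemma Rich_mono (P Q : V -> Prop) : (forall v, P v -> Q v) -> Rich P -> Rich Q.
Proof. intros H R l. destruct (R l) as [e He]. exists e. intuition. Qed.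

Lemma collect (rs : list V) (Q : V -> list E -> Prop) :
  (forall r l l', (forall e, In e l -> In e l') -> Q r l -> Q r l') ->
  (forall r, In r rs -> exists l, Q r l) -> exists L, forall r, In r rs -> Q r L.
Proof.
  intros Hm. induction rs as [|r rs IH]; intros H.
  - exists nil. intros r [].
  - destruct IH as [L HL]. intros; apply H; simpl; auto.
    destruct (H r) as [l Hl]. simpl; auto.
    exists (l ++ L). intros r' [<-|Hr'].
    + eapply Hm; [|eauto]. intros; apply in_or_app; auto.
    + eapply Hm; [|eauto]. intros; apply in_or_app; auto.
Qed.

Hypothesis conn : graph_connected ends.

Lemma rich_step0 (P : V -> Prop) F : Rich P -> exists r, Rich (fun v => P v /\ conn_avoid ends F r v).
Proof.
  intros HR. destruct (HR nil) as [e0 [_ [_ [Hu _]]]].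
  set (u0 := fst (ends e0)).
  apply NNPP; intro Hno.
  assert (Hall : forall r, In r (reps u0 F) -> exists l, forall e, bad e -> ~ In e l ->
     P (fst (ends e)) -> P (snd (ends e)) -> conn_avoid ends F r (fst (ends e)) ->
     conn_avoid ends F r (snd (ends e)) -> False).
  { intros r _. apply NNPP; intro H. apply Hno. exists r. intro l.
    apply NNPP; intro H'. apply H. exists l. intros e Hb Hl Hp1 Hp2 Hc1 Hc2.
    apply H'. exists e. repeat split; auto. }
  destruct (collect _ _ (fun r l l' Hs Hq => fun e Hb Hl => Hq e Hb (fun h => Hl (Hs e h))) Hall) as [L HL].
  destruct (HR (F ++ L)) as [e [Hb [Hl [Hp1 Hp2]]]].
  destruct (ca_reps u0 (fst (ends e)) F (conn _ _)) as [r [Hr Hc]].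
  apply (HL r Hr e Hb (fun h => Hl (in_or_app _ _ _ (or_intror h))) Hp1 Hp2 Hc).
  eapply ca_trans; [exact Hc|]. eapply ca_edge with (e := e).
  intro h; apply Hl; apply in_or_app; auto. left. destruct (ends e); auto.
Qed.

Lemma rich_step (P : V -> Prop) F : Rich P -> exists r, P r /\ Rich (fun v => P v /\ conn_avoid ends F r v).
Proof.
  intros HR. destruct (rich_step0 P F HR) as [r Hr].
  destruct (Hr nil) as [e [_ [_ [[Hp Hc] _]]]].
  exists (fst (ends e)). split; auto. eapply Rich_mono; [|exact Hr].
  intros v [Hv Hcv]. split; auto. eapply ca_trans; [apply ca_sym; exact Hc|exact Hcv].
Qed.
End G.

End P1.
Import P1.
Module P2.
Local Open Scope nat_scope.
Arguments walkk {V E} ends F _ _ _.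
Arguments Rich {V E} ends bad P.

Section S.
Variables (V E : Type) (ends : E -> V * V) (f : E -> nat).
Hypothesis finj : forall a b, f a = f b -> a = b.

Definition pick (k : nat) : list E :=
  match excluded_middle_informative (exists e, f e = k) with
  | left h => proj1_sig (constructive_indefinite_description _ h) :: nil
  | right _ => nil end.

Definition Fl (n : nat) : list E := flat_map pick (seq 0 n).

Lemma In_Fl e n : In e (Fl n) <-> f e < n.
Proof.
  unfold Fl. rewrite in_flat_map. split.
  - intros [k [Hk He]]. apply in_seq in Hk. unfold pick in He.
    destruct excluded_middle_informative as [h|h]; [|destruct He].
    destruct (constructive_indefinite_description _ h) as [e' He']; simpl in He.
    destruct He as [<-|[]]. lia.
  - intros H. exists (f e). split. apply in_seq; lia. unfold pick.
    destruct excluded_middle_informative as [h|h]; [|exfalso; apply h; eauto].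
    destruct (constructive_indefinite_description _ h) as [e' He']; simpl. left; auto.
Qed.

Lemma Fl_mono n m e : n <= m -> In e (Fl n) -> In e (Fl m).
Proof. rewrite !In_Fl. lia. Qed.

Lemma Fl_big (L : list E) : exists N, forall e, In e L -> In e (Fl N).
Proof.
  induction L as [|a L [N HN]]. exists 0; intros e [].
  exists (max (S (f a)) N). intros e [<-|H]; apply In_Fl.
  lia. apply HN, In_Fl in H. lia.
Qed.

Variable bad : E -> Prop.
Variable v0 : V.
Hypothesis conn : graph_connected ends.

Definition choose_r (n : nat) (P : V -> Prop) : V :=
  epsilon (inhabits v0) (fun r => P r /\ Rich ends bad (fun v => P v /\ conn_avoid ends (Fl n) r v)).

Fixpoint Pn (n : nat) : V -> Prop :=
  match n with
  | 0 => fun _ => True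
  | S m => fun v => Pn m v /\ conn_avoid ends (Fl (S m)) (choose_r (S m) (Pn m)) v
  end.

Hypothesis HR0 : Rich ends bad (fun _ => True).

Lemma Pn_rich n : Rich ends bad (Pn n).
Proof.
  induction n as [|n IH]. exact HR0.
  exact (proj2 (epsilon_spec (inhabits v0) _ (rich_step V E ends bad conn (Pn n) (Fl (S n)) IH))).
Qed.

Lemma Pn_rS n : Pn (S n) (choose_r (S n) (Pn n)).
Proof.
  split. exact (proj1 (epsilon_spec (inhabits v0) _ (rich_step V E ends bad conn (Pn n) (Fl (S n)) (Pn_rich n)))).
  apply ca_refl.
Qed.

Lemma Pn_dec n m v : n <= m -> Pn m v -> Pn n v.
Proof. induction 1; auto. intros [H0 _]; auto. Qed.

Lemma Pn_conn n v w : Pn n v -> Pn n w -> conn_avoid ends (Fl n) v w.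
Proof.
  destruct n. intros; apply conn.
  intros [_ H1] [_ H2]. eapply ca_trans; [apply ca_sym; exact H1|exact H2].
Qed.

Lemma Pn_closed n v w : Pn n v -> conn_avoid ends (Fl n) v w -> Pn n w.
Proof.
  induction n as [|n IH]; simpl; auto.
  intros [H1 H2] H3. split.
  - apply (IH H1). eapply ca_mono; [|exact H3]. intros e; apply Fl_mono; lia.
  - eapply ca_trans; eauto.
Qed.

Lemma Pn_r n : Pn n (choose_r (S n) (Pn n)).
Proof. apply (Pn_dec n (S n)). lia. apply Pn_rS. Qed.
End S.

End P2.
Import P2.
Module P3.
Local Open Scope nat_scope.
Arguments walkk {V E} ends F _ _ _.
Arguments Rich {V E} ends bad P.

Lemma ex_min (Q : nat -> Prop) : (exists n, Q n) -> exists n, Q n /\ forall m, m < n -> ~ Q m.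
Proof.
  intros [n Hn]. revert Hn. induction n as [n IH] using (well_founded_induction Wf_nat.lt_wf).
  intros Hn. destruct (classic (exists m, m < n /\ Q m)) as [[m [Hm Qm]]|H].
  - apply (IH m Hm Qm).
  - exists n. split; auto. intros m Hm Qm. apply H; eauto.
Qed.

Section R.
Variables (V E : Type) (ends : E -> V * V) (f : E -> nat) (bad : E -> Prop) (v0 : V) (e0 : E).
Hypothesis finj : forall a b, f a = f b -> a = b.
Hypothesis conn : graph_connected ends.
Hypothesis HR0 : Rich ends bad (fun _ => True).
Let P := Pn V E ends f bad v0.
Let F := Fl E f.
Hypothesis NB : forall v, exists n, ~ P n v.

Definition depth (c : V) : nat := epsilon (inhabits 0) (fun n => P n c /\ ~ P (S n) c).

Lemma depth_spec c : P (depth c) c /\ ~ P (S (depth c)) c.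
Proof.
  apply (epsilon_spec (inhabits 0) (fun n => P n c /\ ~ P (S n) c)). destruct (ex_min (fun n => ~ P n c) (NB c)) as [n [Hn Hm]].
  destruct n. exfalso; apply Hn; exact I.
  exists n. split; auto. apply NNPP. intro h. apply (Hm n); auto.
Qed.

Lemma depth_uniq c m : P m c -> ~ P (S m) c -> depth c = m.
Proof.
  intros H1 H2. destruct (depth_spec c) as [H3 H4].
  destruct (Nat.lt_trichotomy (depth c) m) as [h|[h|h]]; auto; exfalso.
  - apply H4. apply (Pn_dec V E ends f bad v0 (S (depth c)) m); auto.
  - apply H2. apply (Pn_dec V E ends f bad v0 (S m) (depth c)); auto.
Qed.

Definition W (c : V) (k : nat) : Prop := exists y, walkk ends (F (depth c)) k c y /\ P (S (depth c)) y.

Definition dist (c : V) : nat := epsilon (inhabits 0) (fun k => W c k /\ forall j, j < k -> ~ W c j).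

Lemma dist_spec c : W c (dist c) /\ forall j, j < dist c -> ~ W c j.
Proof.
  apply (epsilon_spec (inhabits 0) (fun k => W c k /\ forall j, j < k -> ~ W c j)). apply ex_min.
  set (y := choose_r V E ends f bad v0 (S (depth c)) (P (depth c))).
  assert (Hy : P (S (depth c)) y) by (apply Pn_rS; auto).
  assert (Hc : conn_avoid ends (F (depth c)) c y).
  { apply (Pn_conn V E ends f bad v0); [exact conn|apply depth_spec|]. apply (Pn_dec V E ends f bad v0 _ (S (depth c))); auto. }
  destruct (ca_walkk V E ends _ _ _ Hc) as [k Hk]. exists k, y. auto.
Qed.

Lemma dist_pos c : 0 < dist c.
Proof.
  destruct (dist_spec c) as [[y [Hw Hy]] _]. destruct (dist c); [|lia].
  inversion Hw; subst. exfalso. apply (proj2 (depth_spec y)); auto.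
Qed.

Definition stepc (c : V) : E * V := epsilon (inhabits (e0, v0)) (fun p =>
  ~ In (fst p) (F (depth c)) /\ (ends (fst p) = (c, snd p) \/ ends (fst p) = (snd p, c)) /\
  exists y, walkk ends (F (depth c)) (pred (dist c)) (snd p) y /\ P (S (depth c)) y).

Lemma stepc_spec c :
  ~ In (fst (stepc c)) (F (depth c)) /\ (ends (fst (stepc c)) = (c, snd (stepc c)) \/ ends (fst (stepc c)) = (snd (stepc c), c)) /\
  exists y, walkk ends (F (depth c)) (pred (dist c)) (snd (stepc c)) y /\ P (S (depth c)) y.
Proof.
  apply (epsilon_spec (inhabits (e0, v0)) (fun p =>
  ~ In (fst p) (F (depth c)) /\ (ends (fst p) = (c, snd p) \/ ends (fst p) = (snd p, c)) /\
  exists y, walkk ends (F (depth c)) (pred (dist c)) (snd p) y /\ P (S (depth c)) y)).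
  pose proof (dist_pos c). destruct (dist_spec c) as [[y [Hw Hy]] _].
  destruct (dist c) as [|k]; [lia|]. inversion Hw; subst.
  exists (e, w). simpl. eauto.
Qed.

Definition nxt c := snd (stepc c).
Definition lt_key a b := depth a < depth b \/ (depth a = depth b /\ dist b < dist a).

Lemma step_key c : lt_key c (nxt c).
Proof.
  destruct (stepc_spec c) as [He [Hl [y [Hw Hy]]]]. fold (nxt c) in *.
  destruct (depth_spec c) as [Hc Hc'].
  assert (Hw1 : P (depth c) (nxt c)).
  { eapply Pn_closed; eauto. eapply ca_edge; eauto. }
  destruct (classic (P (S (depth c)) (nxt c))) as [h|h].
  - left. destruct (depth_spec (nxt c)) as [_ h2].
    destruct (Nat.lt_ge_cases (depth c) (depth (nxt c))) as [l|l]; auto. exfalso. apply h2.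
    apply (Pn_dec V E ends f bad v0 _ (S (depth c))); auto. lia.
  - right. assert (Hd : depth (nxt c) = depth c) by (apply depth_uniq; auto).
    split; auto. pose proof (dist_pos c).
    destruct (dist_spec (nxt c)) as [_ Hm].
    destruct (Nat.lt_ge_cases (dist (nxt c)) (dist c)) as [l|l]; auto. exfalso.
    apply (Hm (pred (dist c))). lia. exists y. rewrite Hd. auto.
Qed.

Definition rvf (i : nat) : V := Nat.iter i nxt v0.
Definition ref (i : nat) : E := fst (stepc (rvf i)).

Lemma lt_key_trans a b c : lt_key a b -> lt_key b c -> lt_key a c.
Proof. unfold lt_key; lia. Qed.

Lemma key_incr i j : i < j -> lt_key (rvf i) (rvf j).
Proof.
  induction 1. apply step_key.
  eapply lt_key_trans; eauto. apply step_key.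
Qed.

Lemma rvf_inj m n : rvf m = rvf n -> m = n.
Proof.
  intros H. destruct (Nat.lt_trichotomy m n) as [h|[h|h]]; auto; exfalso.
  - pose proof (key_incr _ _ h). rewrite H in H0. unfold lt_key in H0; lia.
  - pose proof (key_incr _ _ h). rewrite H in H0. unfold lt_key in H0; lia.
Qed.

Lemma ref_link n : ends (ref n) = (rvf n, rvf (S n)) \/ ends (ref n) = (rvf (S n), rvf n).
Proof. apply (stepc_spec (rvf n)). Qed.

Definition R0 : ray ends := Ray ends rvf ref rvf_inj ref_link.

Lemma depth_mono i j : i <= j -> depth (rvf i) <= depth (rvf j).
Proof. intros h. destruct (Nat.eq_dec i j). subst; auto. pose proof (key_incr i j). unfold lt_key in H; lia. Qed.

Lemma reach k i : dist (rvf i) <= k -> exists j, i <= j /\ depth (rvf i) < depth (rvf j).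
Proof.
  revert i. induction k; intros i h. pose proof (dist_pos (rvf i)); lia.
  pose proof (step_key (rvf i)) as [H|[H1 H2]].
  - exists (S i). split. lia. exact H.
  - destruct (IHk (S i)) as [j [h1 h2]]. change (rvf (S i)) with (nxt (rvf i)). lia.
    exists j. split. lia. change (rvf (S i)) with (nxt (rvf i)) in h2. lia.
Qed.

Lemma unbounded N i : exists j, i <= j /\ N <= depth (rvf j).
Proof.
  induction N. exists i; split; lia.
  destruct IHN as [j [h1 h2]]. destruct (reach _ j (le_n _)) as [j' [h3 h4]].
  exists j'. split; lia.
Qed.

Lemma ray_P N : exists k, forall i, k <= i -> P N (rvf i).
Proof.
  destruct (unbounded N 0) as [k [_ hk]]. exists k. intros i hi.
  apply (Pn_dec V E ends f bad v0 N (depth (rvf i))). pose proof (depth_mono k i hi). lia.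
  apply depth_spec.
Qed.
End R.

End P3.
Import P3.
Module P4.
Open Scope R_scope.

Definition ropen (g : R -> Prop) : Prop := forall t, 0 <= t <= 1 -> g t ->
  exists d, 0 < d /\ forall s, 0 <= s <= 1 -> Rabs (s - t) < d -> g s.

Lemma interval_conn_lt (g1 g2 : R -> Prop) t1 t2 : ropen g1 -> ropen g2 ->
  (forall t, 0 <= t <= 1 -> g1 t \/ g2 t) -> (forall t, 0 <= t <= 1 -> g1 t -> g2 t -> False) ->
  0 <= t1 -> t1 < t2 -> t2 <= 1 -> g1 t1 -> g2 t2 -> False.
Proof.
  intros o1 o2 cov disj h1 h12 h2 g1t g2t.
  set (S := fun t => t1 <= t <= t2 /\ forall u, t1 <= u <= t -> g1 u).
  destruct (completeness S) as [s [Hub Hlub]].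
  { exists t2. intros x [hx _]. lra. }
  { exists t1. split. lra. intros u hu. replace u with t1 by lra. auto. }
  assert (hs1 : t1 <= s). { apply Hub. split. lra. intros u hu. replace u with t1 by lra. auto. }
  assert (hs2 : s <= t2). { apply Hlub. intros x [hx _]. lra. }
  assert (A : forall u, t1 <= u < s -> g1 u).
  { intros u hu. apply NNPP. intro hn.
    assert (s <= u). { apply Hlub. intros x [hx hx']. destruct (Rle_lt_dec x u); auto.
      exfalso. apply hn. apply hx'. lra. }
    lra. }
  destruct (cov s ltac:(lra)) as [gs|gs].
  - destruct (Req_dec s t2) as [e|ne]. subst s. apply (disj t2); auto. lra.
    destruct (o1 s ltac:(lra) gs) as [d [hd Hd]].
    set (s' := Rmin (s + d/2) t2).
    assert (m1 : s' <= t2) by apply Rmin_r.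
    assert (m2 : s' <= s + d/2) by apply Rmin_l.
    assert (m3 : s < s') by (unfold s'; apply Rmin_case; lra).
    assert (s' <= s).
    { apply Hub. split. lra.
      intros u hu. destruct (Rlt_le_dec u s). apply A; lra.
      apply Hd. lra. apply Rabs_def1; lra. }
    lra.
  - destruct (Req_dec s t1) as [e|ne]. subst s. apply (disj t1); auto. lra.
    destruct (o2 s ltac:(lra) gs) as [d [hd Hd]].
    set (u := Rmax t1 (s - d/2)).
    assert (hu : t1 <= u < s). { unfold u. split. apply Rmax_l. apply Rmax_case; lra. }
    apply (disj u). lra. apply A; auto. apply Hd. lra.
    apply Rabs_def1. lra. unfold u. assert (s - d/2 <= Rmax t1 (s - d/2)) by apply Rmax_r. lra.
Qed.

Lemma interval_conn (g1 g2 : R -> Prop) t1 t2 : ropen g1 -> ropen g2 ->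
  (forall t, 0 <= t <= 1 -> g1 t \/ g2 t) -> (forall t, 0 <= t <= 1 -> g1 t -> g2 t -> False) ->
  0 <= t1 <= 1 -> 0 <= t2 <= 1 -> g1 t1 -> g2 t2 -> False.
Proof.
  intros o1 o2 cov disj h1 h2 g1t g2t.
  destruct (Rtotal_order t1 t2) as [l|[e|l]].
  - eapply (interval_conn_lt g1 g2); eauto; lra.
  - subst. eapply disj; eauto.
  - apply (interval_conn_lt g2 g1 t2 t1); auto; try lra.
    + intros t ht; destruct (cov t ht); auto.
    + intros t ht a b; eapply disj; eauto.
Qed.

Section T.
Variables (V E : Type) (ends : E -> V * V).

Definition Img (e : E) : xpt V E -> Prop := fun y => exists t, 0 <= t <= 1 /\ y = edge_pt ends e t.

Lemma Img_conn e : xg_connected ends (Img e).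
Proof.
  intros [U1 [U2 [o1 [o2 [cov [[x1 [[t1 [ht1 ->]] Ux1]] [[x2 [[t2 [ht2 ->]] Ux2]] disj]]]]]]].
  apply (interval_conn (fun t => U1 (edge_pt ends e t)) (fun t => U2 (edge_pt ends e t)) t1 t2); auto.
  - intros t ht h. apply o1; auto.
  - intros t ht h. apply o2; auto.
  - intros t ht. apply cov. exists t; auto.
  - intros t ht. apply disj. exists t; auto.
Qed.

Lemma union_conn (A B : xpt V E -> Prop) : xg_connected ends A -> xg_connected ends B ->
  (exists z, A z /\ B z) -> xg_connected ends (fun y => A y \/ B y).
Proof.
  intros cA cB [z [Az Bz]] [U1 [U2 [o1 [o2 [cov [[x1 [Ax1 Ux1]] [[x2 [Ax2 Ux2]] disj]]]]]]].
  assert (sideA : (forall y, A y -> U1 y) \/ (forall y, A y -> U2 y)).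
  { apply NNPP. intro hn. apply cA. exists U1, U2. refine (conj o1 (conj o2 (conj _ (conj _ (conj _ _))))).
    - intros y hy; apply cov; auto.
    - apply NNPP; intro h1. apply hn. right. intros y hy. destruct (cov y (or_introl hy)); auto.
      exfalso; apply h1; eauto.
    - apply NNPP; intro h1. apply hn. left. intros y hy. destruct (cov y (or_introl hy)); auto.
      exfalso; apply h1; eauto.
    - intros y hy; apply disj; auto. }
  assert (sideB : (forall y, B y -> U1 y) \/ (forall y, B y -> U2 y)).
  { apply NNPP. intro hn. apply cB. exists U1, U2. refine (conj o1 (conj o2 (conj _ (conj _ (conj _ _))))).
    - intros y hy; apply cov; auto.
    - apply NNPP; intro h1. apply hn. right. intros y hy. destruct (cov y (or_intror hy)); auto.
      exfalso; apply h1; eauto.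
    - apply NNPP; intro h1. apply hn. left. intros y hy. destruct (cov y (or_intror hy)); auto.
      exfalso; apply h1; eauto.
    - intros y hy; apply disj; auto. }
  destruct sideA as [a|a]; destruct sideB as [b|b].
  - destruct Ax2 as [h|h]; apply (disj x2); auto.
  - apply (disj z); auto.
  - apply (disj z); auto.
  - destruct Ax1 as [h|h]; apply (disj x1); auto.
Qed.

Definition FZ (Z : list (xpt V E)) : list E :=
  flat_map (fun z => match z with PV _ => nil | Defs.PI e _ => e :: nil end) Z.

Lemma comp_walk (Z : list (xpt V E)) x : (forall z, In z Z -> exists e t, z = Defs.PI e t) ->
  forall a b, conn_avoid ends (FZ Z) a b ->
  xg_component ends (fun y => ~ In y Z) x (PV a) -> xg_component ends (fun y => ~ In y Z) x (PV b).
Proof.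
  intros HZ. induction 1 as [u|u w y e He Hl Hc IH]; auto.
  intros [A [HA1 [HA2 [HA3 HA4]]]]. apply IH.
  exists (fun q => A q \/ Img e q). split; [|split; [|split]].
  - intros q [h|[t [ht ->]]]; auto. unfold edge_pt.
    destruct Rlt_dec; [destruct Rlt_dec|].
    + intro hin. apply He. unfold FZ. apply in_flat_map. eexists; split; [exact hin|]. left; auto.
    + intro hin. destruct (HZ _ hin) as [? [? ?]]; discriminate.
    + intro hin. destruct (HZ _ hin) as [? [? ?]]; discriminate.
  - apply union_conn; auto. apply Img_conn. exists (PV u). split; auto.
    destruct Hl as [h|h].
    + exists 0. split. lra. unfold edge_pt. destruct Rlt_dec; [exfalso; lra|]. rewrite h; auto.
    + exists 1. split. lra. unfold edge_pt. destruct Rlt_dec; [|exfalso; lra]. destruct Rlt_dec; [exfalso; lra|]. rewrite h; auto.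
  - auto.
  - right. destruct Hl as [h|h].
    + exists 1. split. lra. unfold edge_pt. destruct Rlt_dec; [|exfalso; lra]. destruct Rlt_dec; [exfalso; lra|]. rewrite h; auto.
    + exists 0. split. lra. unfold edge_pt. destruct Rlt_dec; [exfalso; lra|]. rewrite h; auto.
Qed.
End T.

End P4.
Import P4.

Lemma acc_false (V E : Type) (ends : E -> V * V) (X O1 O2 : gpt ends -> Prop)
  (HX : g_closed X) (H1 : g_open_in X O1) (H2 : g_open_in X O2)
  (Hdisj : forall p, O1 p -> O2 p -> False)
  (Hcov : forall p, X p <-> O1 p \/ O2 p) (p : gpt ends) :
  (forall B, basic_set B -> B p -> exists e,
     ((O1 (inl (PV (fst (ends e)))) /\ O2 (inl (PV (snd (ends e))))) \/
      (O2 (inl (PV (fst (ends e)))) /\ O1 (inl (PV (snd (ends e)))))) /\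
     B (inl (PV (fst (ends e)))) /\ B (inl (PV (snd (ends e))))) -> False.
Proof.
  intros Acc.
  destruct (classic (X p)) as [Xp|nXp].
  - destruct H1 as [U1 [oU1 HU1]]. destruct H2 as [U2 [oU2 HU2]].
    destruct (proj1 (Hcov p) Xp) as [h|h].
    + destruct (oU1 p (proj2 (proj1 (HU1 p) h))) as [B [bB [Bp BU]]].
      destruct (Acc B bB Bp) as [e [Hb [Ba Bb]]].
      destruct Hb as [[a b]|[a b]].
      * apply (Hdisj _ (proj2 (HU1 _) (conj (proj2 (Hcov _) (or_intror b)) (BU _ Bb))) b).
      * apply (Hdisj _ (proj2 (HU1 _) (conj (proj2 (Hcov _) (or_intror a)) (BU _ Ba))) a).
    + destruct (oU2 p (proj2 (proj1 (HU2 p) h))) as [B [bB [Bp BU]]].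
      destruct (Acc B bB Bp) as [e [Hb [Ba Bb]]].
      destruct Hb as [[a b]|[a b]].
      * apply (Hdisj _ a (proj2 (HU2 _) (conj (proj2 (Hcov _) (or_introl a)) (BU _ Ba)))).
      * apply (Hdisj _ b (proj2 (HU2 _) (conj (proj2 (Hcov _) (or_introl b)) (BU _ Bb)))).
  - destruct (HX p nXp) as [B [bB [Bp BU]]].
    destruct (Acc B bB Bp) as [e [Hb [Ba Bb]]].
    apply (BU _ Ba). apply Hcov. destruct Hb as [[a b]|[a b]]; auto.
Qed.

Theorem lemma4p2 (V E : Type) (ends : E -> V * V)
  (cV : countable V) (cE : countable E) (conn : graph_connected ends)
  (X O1 O2 : gpt ends -> Prop)
  (HX : g_closed X) (H1 : g_open_in X O1) (H2 : g_open_in X O2)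
  (Hdisj : forall p, O1 p -> O2 p -> False)
  (Hcov : forall p, X p <-> O1 p \/ O2 p) :
  exists l : list E, forall e : E,
    (O1 (inl (PV (fst (ends e)))) /\ O2 (inl (PV (snd (ends e))))) \/
    (O2 (inl (PV (fst (ends e)))) /\ O1 (inl (PV (snd (ends e))))) ->
    In e l.
Proof.
  apply NNPP; intro Hno.
  set (bad := fun e => (O1 (inl (PV (fst (ends e)))) /\ O2 (inl (PV (snd (ends e))))) \/
    (O2 (inl (PV (fst (ends e)))) /\ O1 (inl (PV (snd (ends e)))))).
  assert (HR0 : Rich ends bad (fun _ => True)).
  { intro l. apply NNPP; intro h. apply Hno. exists l. intros e He.
    apply NNPP; intro hn. apply h. exists e. repeat split; auto. }
  destruct (HR0 nil) as [e0 _].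
  set (v0 := fst (ends e0)).
  destruct cE as [f finj].
  cut (exists p : gpt ends, forall B : gpt ends -> Prop, basic_set B -> B p -> exists e, bad e /\
     B (inl (PV (fst (ends e)))) /\ B (inl (PV (snd (ends e))))).
  { intros [p Hp]. exact (acc_false V E ends X O1 O2 HX H1 H2 Hdisj Hcov p Hp). }
  destruct (classic (exists v, forall n, Pn V E ends f bad v0 n v)) as [[v Hv]|NB].
  - exists (inl (PV v)). intros B [Z [x [HZ [hx HB]]]] Bp.
    apply HB in Bp. simpl in Bp.
    destruct (Fl_big E f finj (FZ V E Z)) as [N HN].
    destruct (Pn_rich V E ends f bad v0 conn HR0 N nil) as [e [Hb [_ [Pa Pb]]]].
    exists e. split. exact Hb. split; apply HB; simpl.
    + eapply comp_walk; eauto. eapply ca_mono; [exact HN|]. apply (Pn_conn V E ends f bad v0); auto.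
    + eapply comp_walk; eauto. eapply ca_mono; [exact HN|]. apply (Pn_conn V E ends f bad v0); auto.
  - assert (NB' : forall v, exists n, ~ Pn V E ends f bad v0 n v).
    { intro v. apply NNPP; intro h. apply NB. exists v. intro n. apply NNPP; intro h'. apply h; eauto. }
    set (R := R0 V E ends f bad v0 e0 finj conn HR0 NB').
    exists (inr (exist _ (edge_equiv R) (ex_intro _ R (fun R' => iff_refl _)) : gend ends)).
    intros B [Z [x [HZ [hx HB]]]] Bp.
    apply HB in Bp. simpl in Bp. destruct Bp as [R' [Heq Rin]].
    destruct (Fl_big E f finj (FZ V E Z)) as [N HN].
    destruct (Heq (FZ V E Z)) as [y [k1 [k2 [Hk1 Hk2]]]].
    destruct (ray_P V E ends f bad v0 e0 finj conn HR0 NB' N) as [k Hk].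
    destruct (Pn_rich V E ends f bad v0 conn HR0 N nil) as [e [Hb [_ [Pa Pb]]]].
    set (i := max k k1).
    assert (Hi : Pn V E ends f bad v0 N (rv R i)) by (apply Hk; lia).
    assert (Hy : conn_avoid ends (FZ V E Z) (rv R' k2) (rv R i)).
    { eapply ca_trans. apply ca_sym. apply (Hk2 k2). lia. apply (Hk1 i). lia. }
    assert (Hc : xg_component ends (fun y => ~ In y Z) x (PV (rv R' k2))) by apply Rin.
    exists e. split. exact Hb. split; apply HB; simpl.
    + apply (comp_walk V E ends Z x HZ (rv R i)).
      eapply ca_mono; [exact HN|]. apply (Pn_conn V E ends f bad v0); auto.
      exact (comp_walk V E ends Z x HZ _ _ Hy Hc).
    + apply (comp_walk V E ends Z x HZ (rv R i)).
      eapply ca_mono; [exact HN|]. apply (Pn_conn V E ends f bad v0); auto.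
      exact (comp_walk V E ends Z x HZ _ _ Hy Hc).
Qed.
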